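(* Let $x_1\in(0,1)$ and define $x_{n+1}=\frac{(1+x_n)^2}{4}$ for $n\ge1$. Then $\sum_{n\ge1}n(x_{n+1}-x_n)=+\infty$. *)

(* Defs.v *)
From Stdlib Require Import Reals.
From Coquelicot Require Import Coquelicot.
Open Scope R_scope.

(* The sequence x_{n+1} = (1 + x_n)^2 / 4, shifted to start at index 0:
   xseq x1 0 = x_1, xseq x1 k = x_{k+1}. *)
Fixpoint xseq (x1 : R) (k : nat) : R :=
  match k with
  | O => x1
  | S k' => (1 + xseq x1 k') ^ 2 / 4
  end.

(* Main.v *)
Require Import Defs.
From Stdlib Require Import Reals.
From Coquelicot Require Import Coquelicot.
From Stdlib Require Import Lra Lia.
Open Scope R_scope.

Lemma e_rec x1 k : 1 - xseq x1 (S k) = (1 - xseq x1 k) - (1 - xseq x1 k)^2/4.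
Proof. simpl. field. Qed.

Lemma d_eq x1 k : xseq x1 (S k) - xseq x1 k = (1 - xseq x1 k)^2/4.
Proof. simpl. field. Qed.

Lemma e_bnd x1 (hx1 : 0 < x1 < 1) k : 0 < 1 - xseq x1 k < 1.
Proof.
  induction k as [|k IH]. simpl; lra.
  rewrite e_rec. set (u := 1 - xseq x1 k) in *. nra.
Qed.

Lemma inv_step u : 0 < u < 1 -> / (u - u^2/4) <= / u + 1/2.
Proof.
  intros H.
  replace (/ (u - u^2/4)) with (/u + 1/2 + (u-2) * / (2*(4-u))).
  2:{ field. repeat split; try lra; nra. }
  assert (0 < / (2*(4-u))) by (apply Rinv_0_lt_compat; lra).
  nra.
Qed.

Lemma inv_bnd x1 (hx1 : 0 < x1 < 1) k :
  / (1 - xseq x1 k) <= / (1 - x1) + INR k / 2.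
Proof.
  induction k as [|k IH]. simpl; lra.
  rewrite e_rec. pose proof (inv_step _ (e_bnd x1 hx1 k)).
  rewrite S_INR. lra.
Qed.

Lemma e_low x1 (hx1 : 0 < x1 < 1) k :
  / ((/ (1 - x1) + 1/2) * INR (S k)) <= 1 - xseq x1 k.
Proof.
  pose proof (inv_bnd x1 hx1 k). pose proof (e_bnd x1 hx1 k).
  assert (0 < / (1 - x1)) by (apply Rinv_0_lt_compat; lra).
  pose proof (pos_INR k). rewrite S_INR.
  rewrite <- (Rinv_inv (1 - xseq x1 k)).
  apply Rinv_le_contravar.
  - apply Rinv_0_lt_compat; lra.
  - nra.
Qed.

Lemma ln_step n : 0 < n -> ln (n + 1) - ln n <= / n.
Proof.
  intros H.
  replace (n + 1) with (n * (1 + / n)) by (field; lra).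
  rewrite ln_mult; try lra.
  2:{ assert (0 < / n) by (apply Rinv_0_lt_compat; lra). lra. }
  pose proof (exp_ineq1_le (ln (1 + / n))).
  rewrite exp_ln in H0.
  2:{ assert (0 < / n) by (apply Rinv_0_lt_compat; lra). lra. }
  lra.
Qed.

Theorem lemma5p1 (x1 : R) (hx1 : 0 < x1 < 1) :
  is_lim_seq
    (fun N : nat => sum_n (fun k : nat => INR (S k) * (xseq x1 (S k) - xseq x1 k)) N)
    p_infty.
Proof.
  set (A := / (1 - x1) + 1/2).
  assert (HA : 0 < A).
  { unfold A. assert (0 < / (1 - x1)) by (apply Rinv_0_lt_compat; lra). lra. }
  set (c := / (4 * A^2)).
  assert (Hc : 0 < c) by (unfold c; apply Rinv_0_lt_compat; nra).
  assert (Hterm : forall k, c * / INR (S k) <= INR (S k) * (xseq x1 (S k) - xseq x1 k)).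
  { intro k. rewrite d_eq. pose proof (e_low x1 hx1 k). fold A in H.
    assert (HS : 0 < INR (S k)) by (apply lt_0_INR; lia).
    assert (0 < / (A * INR (S k))) by (apply Rinv_0_lt_compat; nra).
    assert ((/ (A * INR (S k)))^2 <= (1 - xseq x1 k)^2) by nra.
    replace (c * / INR (S k)) with (INR (S k) * ((/ (A * INR (S k)))^2 / 4)).
    2:{ unfold c. field. lra. }
    nra. }
  assert (Hsum : forall N, c * ln (INR (S N) + 1) <=
     sum_n (fun k : nat => INR (S k) * (xseq x1 (S k) - xseq x1 k)) N).
  { induction N as [|N IH].
    - rewrite sum_O. pose proof (Hterm 0%nat). pose proof (ln_step 1 ltac:(lra)).
      rewrite ln_1 in H0. simpl INR in *. 
      replace (0+1) with 1 in * by ring. rewrite Rinv_1 in *. nra.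
    - rewrite sum_Sn. pose proof (Hterm (S N)).
      assert (HS : 0 < INR (S (S N))) by (apply lt_0_INR; lia).
      pose proof (ln_step _ HS).
      rewrite (S_INR (S N)) in *. match goal with |- context [plus ?a ?b] => change (plus a b) with (Rplus a b) end. nra. }
  apply is_lim_seq_spec. intro M.
  pose proof is_lim_seq_INR as HI. apply is_lim_seq_spec in HI.
  destruct (HI (exp (M / c))) as [N HN].
  exists N. intros n Hn. specialize (HN n Hn).
  eapply Rlt_le_trans. 2: apply Hsum.
  assert (M / c < ln (INR (S n) + 1)).
  { rewrite <- (ln_exp (M / c)). apply ln_increasing. apply exp_pos.
    rewrite S_INR. lra. }
  replace M with (c * (M / c)) by (field; lra). nra.
Qed.
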